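(* For every $n\ge1$, \[ R_n=\inf\big\{R_n(\mathbb{P}):\ \mathbb{P}\in\mathcal{P}_n,\ {}^{\gamma}\mathbb{P}\pi=\mathbb{P}\ \text{for all }(\gamma,\pi)\in S_{inv}\times S_n\big\}. \]
   Context: Scheduling on two machines with $n$ tasks. A processing-time matrix is $T\in\mathbb{R}_{++}^{2\times n}$; an allocation is $X\in\{0,1\}^{2\times n}$ with $X_{1j}+X_{2j}=1$; makespan $M(X,T)=\max_{i\in\{1,2\}}\sum_jX_{ij}T_{ij}$; $M^*(T)=\min_XM(X,T)$. $\mathcal{P}_n$ is the set of Borel probability measures on $\mathbb{R}^n$ supported in $\mathbb{R}_{++}^n$. For $\mathbb{P}\in\mathcal{P}_n$, algorithm $\mathcal{A}^{\mathbb{P}}$ draws $\mathbf{z}\sim\mathbb{P}$ and sends task $j$ to machine 1 iff $T_{1j}/T_{2j}<z_j$ (else to machine 2); $M(\mathbb{P},T)$ is its expected makespan, $R_n(\mathbb{P})=\sup_TM(\mathbb{P},T)/M^*(T)\in[1,\infty]$, and $R_n=\inf_{\mathbb{P}\in\mathcal{P}_n}R_n(\mathbb{P})$. $S_n$ is the symmetric group on $[n]$; $\mathbf{z}\pi$ is $\mathbf{z}$ with entries permuted by $\pi$. $S_{inv}=\{id,inv\}$ acts by ${}^{id}\mathbf{x}=\mathbf{x}$, ${}^{inv}\mathbf{x}=(1/x_1,\dots,1/x_n)$. ${}^{\gamma}\mathbb{P}\pi$ is the distribution of ${}^{\gamma}\mathbf{z}\pi$ for $\mathbf{z}\sim\mathbb{P}$.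 *)

(* Defs.v *)
From HB Require Import structures.
From mathcomp Require Import all_boot all_order all_algebra all_fingroup.
From mathcomp Require Import all_classical all_reals all_analysis.

Set Implicit Arguments.
Unset Strict Implicit.
Unset Printing Implicit Defensive.

Import Order.TTheory GRing.Theory Num.Theory.
Local Open Scope classical_set_scope.
Local Open Scope ring_scope.

Section Scheduling.
Variable R : realType.
Variable n : nat.

(* Processing-time matrix T in R_{++}^{2 x n}: row 0 = machine 1, row 1 = machine 2. *)
Definition pos_matrix (T : 'M[R]_(2, n)) : Prop := forall i j, 0 < T i j.

(* An allocation X in {0,1}^{2 x n} with X_{1j}+X_{2j} = 1 is encoded by
   x : {ffun 'I_n -> bool}, x j = true iff X_{1j} = 1 (task j on machine 1). *)
Definition makespan (x : {ffun 'I_n -> bool}) (T : 'M[R]_(2, n)) : R :=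
  Num.max (\sum_(j < n | x j) T ord0 j) (\sum_(j < n | ~~ x j) T 1 j).

Definition opt_makespan (T : 'M[R]_(2, n)) : R :=
  \big[Num.min/makespan [ffun => true] T]_(x : {ffun 'I_n -> bool}) makespan x T.

Definition alloc_of (z : n.-tuple R) (T : 'M[R]_(2, n)) : {ffun 'I_n -> bool} :=
  [ffun j => T ord0 j / T 1 j < tnth z j].

Definition supported_pos (P : probability (n.-tuple R) R) : Prop :=
  P [set z : n.-tuple R | forall j, 0 < tnth z j] = 1%E.

Definition exp_makespan (P : probability (n.-tuple R) R) (T : 'M[R]_(2, n))
  : \bar R :=
  (\int[P]_z (makespan (alloc_of z T) T)%:E)%E.

Definition Rn_of (P : probability (n.-tuple R) R) : \bar R :=
  ereal_sup [set (exp_makespan P T * ((opt_makespan T)^-1)%:E)%E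
            | T in pos_matrix].

Definition Rn : \bar R := ereal_inf [set Rn_of P | P in supported_pos].

(* the action of (gamma, pi) in S_inv x S_n : z |-> ^gamma (z pi) ;
   gamma = false is id, gamma = true is inv. *)
Definition act (gamma : bool) (pi : 'S_n) (z : n.-tuple R) : n.-tuple R :=
  [tuple (if gamma then (tnth z (pi j))^-1 else tnth z (pi j)) | j < n].

Definition invariant (P : probability (n.-tuple R) R) : Prop :=
  forall (gamma : bool) (pi : 'S_n) (A : set (n.-tuple R)),
    measurable A -> P (act gamma pi @^-1` A) = P A.

End Scheduling.

Definition sym_supported (R : realType) (n : nat)
  : set (probability (n.-tuple R) R) :=
  fun P => supported_pos P /\ invariant P.
Arguments sym_supported R n _ : clear implicits.

(* Main.v *)
Require Import Defs.
From HB Require Import structures.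
From mathcomp Require Import all_boot all_order all_algebra all_fingroup.
From mathcomp Require Import all_classical all_reals all_analysis.
From mathcomp Require Import measurable_realfun.
From mathcomp Require Import ring lra.
Set Implicit Arguments.
Unset Strict Implicit.
Unset Printing Implicit Defensive.
Import Order.TTheory GRing.Theory Num.Theory.
Local Open Scope classical_set_scope.
Local Open Scope ring_scope.


Section Opt.
Variable R : realType.
Variable n : nat.
Implicit Types (T : 'M[R]_(2, n)) (x : {ffun 'I_n -> bool}).

Lemma opt_le T x : opt_makespan T <= makespan x T.
Proof.
rewrite /opt_makespan (bigD1 x) //=.
by rewrite ge_min lexx.
Qed.

Lemma opt_ex T : exists x, opt_makespan T = makespan x T.
Proof.
rewrite /opt_makespan; elim/big_rec: _ => [|y acc _ [x ->]]; first by exists [ffun => true].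
have [h|h] := leP (makespan y T) (makespan x T).
  by exists y.
by exists x.
Qed.

Lemma opt_le_opt T1 T2 :
  (forall x, exists y, makespan y T2 <= makespan x T1) ->
  opt_makespan T2 <= opt_makespan T1.
Proof.
move=> H; have [x ->] := opt_ex T1; have [y hy] := H x.
exact: le_trans (opt_le _ _) hy.
Qed.

End Opt.


Section Tr.
Variable R : realType.
Variable n : nat.
Implicit Types (T : 'M[R]_(2, n)) (x : {ffun 'I_n -> bool}).

Definition flip (b : bool) (i : 'I_2) : 'I_2 :=
  if b then (if i == ord0 then 1 else ord0) else i.

Definition trm (b : bool) (s : 'S_n) T : 'M[R]_(2, n) :=
  \matrix_(i, k) T (flip b i) (s^-1%g k).

Definition xtr (b : bool) (s : 'S_n) x : {ffun 'I_n -> bool} :=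
  [ffun k => x (s^-1%g k) (+) b].

Lemma mk_tr b s T x : makespan (xtr b s x) (trm b s T) = makespan x T.
Proof.
rewrite /makespan.
rewrite (reindex_inj (@perm_inj _ s)) /=.
rewrite [X in Num.max _ X](reindex_inj (@perm_inj _ s)) /=.
under eq_bigl do rewrite ffunE permK.
under eq_bigr do rewrite mxE permK.
under [X in Num.max _ X]eq_bigl do rewrite ffunE permK.
under [X in Num.max _ X]eq_bigr do rewrite mxE permK.
case: b => /=; last by under eq_bigl do rewrite addbF; under [X in Num.max _ X]eq_bigl do rewrite addbF.
under eq_bigl do rewrite addbT.
under [X in Num.max _ X]eq_bigl do rewrite addbT negbK.
by rewrite maxC.
Qed.

Lemma opt_tr b s T : opt_makespan (trm b s T) = opt_makespan T.
Proof.
apply/eqP; rewrite eq_le; apply/andP; split; apply: opt_le_opt => x.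
  by exists (xtr b s x); rewrite mk_tr.
exists [ffun j => x (s j) (+) b].
rewrite -(mk_tr b s) (_ : xtr _ _ _ = x) //.
by apply/ffunP => k; rewrite !ffunE permKV -addbA addbb addbF.
Qed.

End Tr.


Section Bounds.
Variable R : realType.
Variable n : nat.
Implicit Types (T : 'M[R]_(2, n)) (x : {ffun 'I_n -> bool}).

Lemma mk_pos T x : (0 < n)%N -> pos_matrix T -> 0 < makespan x T.
Proof.
move=> hn hT; pose j0 : 'I_n := Ordinal hn.
rewrite /makespan lt_max; case hx: (x j0).
- apply/orP; left; rewrite (bigD1 j0) //=; apply: ltr_pwDl; first exact: hT.
  by apply: sumr_ge0 => j _; exact/ltW/hT.
- apply/orP; right; rewrite (bigD1 j0) ?hx //=; apply: ltr_pwDl; first exact: hT.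
  by apply: sumr_ge0 => j _; exact/ltW/hT.
Qed.

Lemma opt_pos T : (0 < n)%N -> pos_matrix T -> 0 < opt_makespan T.
Proof. by move=> hn hT; have [x ->] := opt_ex T; exact: mk_pos. Qed.

Definition Ksum T : R := \sum_j (T ord0 j + T 1 j).

Lemma mk_le_K T x : (forall i j, 0 <= T i j) -> makespan x T <= Ksum T.
Proof.
move=> hT; rewrite /makespan ge_max /Ksum big_split /=; apply/andP; split.
- apply: (le_trans (y := \sum_j T ord0 j)); last by rewrite lerDl sumr_ge0.
  by rewrite [X in _ <= X](bigID x) /= lerDl; apply: sumr_ge0.
- apply: (le_trans (y := \sum_j T 1 j)); last by rewrite lerDr sumr_ge0.
  by rewrite [X in _ <= X](bigID x) /= lerDr; apply: sumr_ge0.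
Qed.

Lemma mk_ge0 T x : (forall i j, 0 <= T i j) -> 0 <= makespan x T.
Proof. by move=> hT; rewrite /makespan le_max sumr_ge0. Qed.

Lemma mk_scale T1 T2 (a : R) x : 0 <= a ->
  (forall i j, T2 i j <= a * T1 i j) -> makespan x T2 <= a * makespan x T1.
Proof.
move=> ha h; rewrite /makespan ge_max; apply/andP; split.
- apply: (le_trans (y := a * \sum_(j < n | x j) T1 ord0 j)).
    by rewrite mulr_sumr; apply: ler_sum => j _.
  by apply: ler_wpM2l => //; rewrite le_max lexx.
- apply: (le_trans (y := a * \sum_(j < n | ~~ x j) T1 1 j)).
    by rewrite mulr_sumr; apply: ler_sum => j _.
  by apply: ler_wpM2l => //; rewrite le_max lexx orbT.
Qed.

Lemma opt_scale T1 T2 (a : R) : 0 <= a ->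
  (forall i j, T2 i j <= a * T1 i j) -> opt_makespan T2 <= a * opt_makespan T1.
Proof.
move=> ha h; have [x ->] := opt_ex T1.
exact: le_trans (opt_le _ x) (mk_scale x ha h).
Qed.

End Bounds.


Section Meas.
Variable R : realType.
Variable n : nat.

Lemma measurable_inv : measurable_fun [set: R] (@GRing.inv R).
Proof.
rewrite (_ : GRing.inv = fun x : R => if x == 0 then 0 else x^-1); last first.
  by apply/funext => x; case: eqP => // ->; rewrite invr0.
apply: measurable_fun_if => //.
- by apply: measurable_realfun.measurable_fun_eqr.
- rewrite setTI (_ : _ @^-1` _ = [set x : R | x != 0]); last first.
    by apply/seteqP; split => x /=; case: eqP.
  apply: measurable_realfun.open_continuous_measurable_fun; first exact: open_neq.
  by move=> x; rewrite inE /= => hx; exact: inv_continuous.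
Qed.

Lemma measurable_act g s : measurable_fun [set: n.-tuple R] (Defs.act g s).
Proof.
apply/measurable_fun_tnthP => i.
rewrite (_ : _ \o _ = fun z : n.-tuple R =>
   if g then (tnth z (s i))^-1 else tnth z (s i)); last first.
  by apply/funext => z /=; rewrite tnth_mktuple.
case: g.
- exact: measurableT_comp measurable_inv (measurable_tnth _).
- exact: measurable_tnth.
Qed.

Lemma mk_alloc_E (A B : 'M[R]_(2, n)) (z : n.-tuple R) :
  makespan (alloc_of z A) B =
  Num.max (\sum_j (if A ord0 j / A 1 j < tnth z j then B ord0 j else 0))
          (\sum_j (if A ord0 j / A 1 j < tnth z j then 0 else B 1 j)).
Proof.
rewrite /makespan big_mkcond [X in Num.max _ X]big_mkcond /=.
under eq_bigr do rewrite ffunE.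
under [X in Num.max _ X]eq_bigr do rewrite ffunE if_neg.
by [].
Qed.

Lemma measurable_mk (A B : 'M[R]_(2, n)) :
  measurable_fun [set: n.-tuple R] (fun z => makespan (alloc_of z A) B).
Proof.
under eq_fun do rewrite mk_alloc_E.
apply: measurable_realfun.measurable_maxr; apply: measurable_sum => j;
  (apply: measurable_fun_ifT; [apply: measurable_realfun.measurable_fun_ltr => //; exact: measurable_tnth| |]) => //.
Qed.

Lemma emeasurable_mk (A B : 'M[R]_(2, n)) :
  measurable_fun [set: n.-tuple R] (fun z => (makespan (alloc_of z A) B)%:E).
Proof. by apply/measurable_EFinP; exact: measurable_mk. Qed.

End Meas.


Definition Grp (n : nat) := (bool * 'S_n)%type.
Definition actg (R : realType) (n : nat) (g : Grp n) : n.-tuple R -> n.-tuple R :=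
  Defs.act g.1 g.2.

Section Pfw.
Context (R : realType) (n : nat) (P : probability (n.-tuple R) R) (g : Grp n).

Definition pfw (A : set (n.-tuple R)) : \bar R := P (actg g @^-1` A).

Let mg : measurable_fun [set: n.-tuple R] (actg g).
Proof. exact: measurable_act. Qed.

Let pfw0 : pfw set0 = 0%E.
Proof. by rewrite /pfw preimage_set0 measure0. Qed.

Let pfw_ge0 A : (0 <= pfw A)%E.
Proof. exact: measure_ge0. Qed.

Let pfw_sigma_additive : semi_sigma_additive pfw.
Proof.
move=> F mF tF mUF; rewrite /pfw preimage_bigcup.
apply: measure_semi_sigma_additive.
- by move=> k; rewrite -[X in measurable X]setTI; exact: mg.
- apply/trivIsetP => /= i j _ _ ij; rewrite -preimage_setI.
  by move/trivIsetP : tF => /(_ _ _ _ _ ij) ->//; rewrite preimage_set0.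
- by rewrite -preimage_bigcup -[X in measurable X]setTI; exact: mg.
Qed.

HB.instance Definition _ := isMeasure.Build _ _ _ pfw pfw0 pfw_ge0 pfw_sigma_additive.

End Pfw.

Section Sym.
Context (R : realType) (n : nat) (P : probability (n.-tuple R) R).

Definition g0 : Grp n := (false, 1%g).
Definition NG : nat := #|{: Grp n}|.
Definition mus (k : nat) : {measure set (n.-tuple R) -> \bar R} :=
  pfw P (nth g0 (enum {: Grp n}) k).

Lemma NG_gt0 : (0 < NG)%N.
Proof. by rewrite /NG; apply/card_gt0P; exists g0. Qed.

Definition rNG : {nonneg R} := (NG%:R^-1)%:nng.

Definition symQ (A : set (n.-tuple R)) : \bar R := mscale rNG (msum mus NG) A.

Lemma symQE A : symQ A = ((NG%:R^-1)%:E * \sum_(g : Grp n) P (actg g @^-1` A))%E.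
Proof.
rewrite /symQ /mscale /=; congr (_ * _)%E.
rewrite /msum /= /mus /pfw /=.
transitivity (\sum_(g <- enum {: Grp n}) P (actg g @^-1` A)).
  by rewrite (big_nth g0) big_mkord /NG cardE.
by rewrite big_enum; apply: eq_bigl => g; rewrite inE.
Qed.

Let symQ0 : symQ set0 = 0%E.
Proof. exact: measure0. Qed.
Let symQ_ge0 A : (0 <= symQ A)%E.
Proof. exact: measure_ge0. Qed.
Let symQ_sa : semi_sigma_additive symQ.
Proof. exact: measure_semi_sigma_additive. Qed.
HB.instance Definition _ := isMeasure.Build _ _ _ symQ symQ0 symQ_ge0 symQ_sa.

Let symQT : symQ setT = 1%E.
Proof.
rewrite symQE; under eq_bigr do rewrite preimage_setT probability_setT.
rewrite sumEFin -EFinM; congr (_%:E).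
by rewrite sumr_const -/NG mulVf // pnatr_eq0 -lt0n NG_gt0.
Qed.
HB.instance Definition _ := Measure_isProbability.Build _ _ _ symQ symQT.

End Sym.


Section SymProps.
Context (R : realType) (n : nat).

Definition gmul (g h : Grp n) : Grp n := (g.1 (+) h.1, (h.2 * g.2)%g).

Lemma actg_comp (g h : Grp n) (z : n.-tuple R) :
  actg h (actg g z) = actg (gmul g h) z.
Proof.
apply: eq_from_tnth => j; rewrite /actg /Defs.act /= !tnth_mktuple permM.
by case: h.1; case: g.1 => //=; rewrite invrK.
Qed.

Lemma gmul_inj (h : Grp n) : injective (fun g => gmul g h).
Proof.
move=> [a s] [b t] /= [] hab hst.
by congr (_, _); [move: hab; case: a; case: b; case: h.1 | exact: (mulgI _ _ _ hst)].
Qed.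

Definition posset : set (n.-tuple R) := [set z | forall j, 0 < tnth z j].

Lemma measurable_posset : measurable posset.
Proof.
rewrite (_ : posset = \bigcap_j ((@tnth n R)^~ j @^-1` `]0, +oo[)); last first.
  by apply/seteqP; split => z /= h j; [move=> _; rewrite /= in_itv /= andbT; exact: h|
     have := h j I; rewrite /= in_itv /= andbT].
apply: fin_bigcap_measurable => // j _.
by rewrite -[X in measurable X]setTI; apply: measurable_tnth.
Qed.

Lemma actg_pos (g : Grp n) z : posset z -> posset (actg g z).
Proof.
move=> hz j; rewrite /actg /Defs.act tnth_mktuple.
by case: g.1 => //; rewrite invr_gt0.
Qed.

Variable P : probability (n.-tuple R) R.

Lemma symQ_invariant : Defs.invariant (symQ P).
Proof.
move=> gamma pi A mA; change (symQ P (Defs.act gamma pi @^-1` A) = symQ P A).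
rewrite !symQE; congr (_ * _)%E.
pose h : Grp n := (gamma, pi).
rewrite [RHS](reindex_inj (@gmul_inj h)) /=.
apply: eq_bigr => g _; congr (P _).
by apply/seteqP; split => z /=; rewrite -actg_comp.
Qed.

Lemma symQ_supported : supported_pos P -> supported_pos (symQ P).
Proof.
move=> hP; rewrite /supported_pos; change (symQ P posset = 1%E); rewrite symQE.
have h1 : forall g : Grp n, P (actg g @^-1` posset) = 1%E.
  move=> g; apply/eqP; rewrite eq_le probability_le1 /=; last first.
    by rewrite -[X in measurable X]setTI; apply: measurable_act => //; exact: measurable_posset.
  rewrite -hP; apply: le_measure; rewrite ?inE; first exact: measurable_posset.
  - by rewrite -[X in measurable X]setTI; apply: measurable_act => //; exact: measurable_posset.
  - by move=> z; exact: actg_pos.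
under eq_bigr do rewrite h1.
rewrite sumEFin -EFinM; congr (_%:E).
by rewrite sumr_const -/NG mulVf // pnatr_eq0 -lt0n NG_gt0.
Qed.

End SymProps.


Section SymInt.
Context (R : realType) (n : nat) (P : probability (n.-tuple R) R).

Lemma pfw_integral (g : Grp n) (f : n.-tuple R -> \bar R) :
  measurable_fun setT f -> (forall z, (0 <= f z)%E) ->
  (\int[pfw P g]_z f z = \int[P]_z f (actg g z))%E.
Proof.
move=> mf f0.
have := @ge0_integral_pushforward _ _ _ _ R (actg g) (@measurable_act R n g.1 g.2) P setT f
  measurableT mf (fun y _ => f0 y).
rewrite preimage_setT => <-.
by [].
Qed.

Lemma symQ_integral (f : n.-tuple R -> \bar R) :
  measurable_fun setT f -> (forall z, (0 <= f z)%E) ->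
  (\int[symQ P]_z f z = (NG n)%:R^-1%:E * \sum_(g : Grp n) \int[P]_z f (actg g z))%E.
Proof.
move=> mf f0.
change (\int[mscale (rNG R n) (msum (mus P) (NG n))]_z f z =
   (NG n)%:R^-1%:E * \sum_(g : Grp n) \int[P]_z f (actg g z))%E.
rewrite ge0_integral_mscale //.
congr (_ * _)%E.
rewrite ge0_integral_measure_sum //.
transitivity (\sum_(g <- enum {: Grp n}) \int[P]_z f (actg g z))%E; last first.
  by rewrite big_enum; apply: eq_bigl => g; rewrite inE.
rewrite (big_nth (g0 n)) big_mkord /NG cardE.
by apply: eq_bigr => k _; rewrite /mus pfw_integral.
Qed.

End SymInt.


Lemma near_fin (I : finType) (Q : I -> nat -> Prop) :
  (forall i, \forall m \near \oo, Q i m) -> \forall m \near \oo, forall i, Q i m.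
Proof.
move=> h.
have : forall i, exists N, forall m, (N <= m)%N -> Q i m.
  move=> i; have [N _ hN] := h i; exists N => m hm; exact: hN.
move=> /fin_all_exists [f hf].
exists (\max_i f i) => // m /= hm i; apply: hf.
by apply: leq_trans hm; apply: leq_bigmax.
Qed.

Section Pointwise.
Variable R : realType.

Lemma key_real (a b z : R) : 0 < a -> 0 < b -> 0 < z ->
  \forall m \near \oo, (b / (a * (1 + m.+1%:R^-1)) < z) = ~~ (a / b < z^-1).
Proof.
move=> ha hb hz.
have hd : forall m : nat, 0 < (m.+1%:R : R)^-1 by move=> m; rewrite invr_gt0.
have E1 : (a / b < z^-1) = (a * z < b).
  by rewrite ltr_pdivrMr // mulrC ltr_pdivlMr.
have E2 : forall m : nat, (b / (a * (1 + m.+1%:R^-1)) < z) = (b < z * (a * (1 + m.+1%:R^-1))).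
  move=> m; rewrite ltr_pdivrMr //.
  have := hd m; set d := (m.+1%:R : R)^-1 => hdm.
  by apply: mulr_gt0 => //; rewrite (lt_le_trans ltr01) // lerDl ltW.
have haz : 0 < a * z by apply: mulr_gt0.
rewrite E1; case: (ltrP (a * z) b) => hab /=.
- have he : 0 < (b - a * z) / (a * z) by apply: divr_gt0; rewrite ?subr_gt0.
  have ee : a * z * ((b - a * z) / (a * z)) = b - a * z.
    by rewrite mulrC -mulrA mulVf ?mulr1 // gt_eqF.
  near=> m; rewrite E2; apply/negbTE; rewrite -leNgt.
  have : (m.+1%:R : R)^-1 < (b - a * z) / (a * z).
    by near: m; exact: (@near_infty_natSinv_lt R (PosNum he)).
  move: ee; set e := (b - a * z) / (a * z); set d := (m.+1%:R : R)^-1 => ee hde.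
  nra.
- apply: nearW => m; rewrite E2.
  have := hd m; set d := (m.+1%:R : R)^-1 => hdm.
  apply/idP; nra.
Unshelve. all: by end_near.
Qed.

End Pointwise.

Section Lim.
Variable R : realType.
Variable n : nat.

Definition bumpm (d : R) (M : 'M[R]_(2, n)) : 'M[R]_(2, n) :=
  \matrix_(i, k) (if i == ord0 then M i k else M i k * (1 + d)).

Lemma alloc_lim (T : 'M[R]_(2, n)) (s : 'S_n) (z : n.-tuple R) :
  pos_matrix T -> posset z ->
  \forall m \near \oo, alloc_of z (bumpm (m.+1%:R^-1) (trm true s T)) =
     xtr true s (alloc_of (actg ((true, s) : Grp n) z) T).
Proof.
move=> hT hz.
have := @near_fin _ (fun k m => alloc_of z (bumpm (m.+1%:R^-1) (trm true s T)) k =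
     xtr true s (alloc_of (actg ((true, s) : Grp n) z) T) k).
move=> /(_ _) H; apply: filterS (H _) => [m hm|k]; first by apply/ffunP.
rewrite /alloc_of /xtr /actg /Defs.act.
have := key_real (hT ord0 (s^-1%g k)) (hT 1 (s^-1%g k)) (hz k).
apply: filterS => m hm.
rewrite !ffunE !mxE /= tnth_mktuple permKV addbT -hm.
by [].
Qed.

End Lim.


Section Main.
Context (R : realType) (n : nat) (hn : (0 < n)%N) (P : probability (n.-tuple R) R).
Hypothesis hP : supported_pos P.

Lemma exp_ge0 T : pos_matrix T -> (0 <= exp_makespan P T)%E.
Proof.
move=> hT; apply: integral_ge0 => z _; rewrite lee_fin.
by apply: mk_ge0 => i j; exact/ltW/hT.
Qed.

Lemma ratio_le T : pos_matrix T -> (exp_makespan P T <= Rn_of P * (opt_makespan T)%:E)%E.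
Proof.
move=> hT; have hc := opt_pos hn hT.
have h : (exp_makespan P T * ((opt_makespan T)^-1)%:E <= Rn_of P)%E.
  by apply: ereal_sup_ubound; exists T.
have -> : exp_makespan P T =
    (exp_makespan P T * ((opt_makespan T)^-1)%:E * (opt_makespan T)%:E)%E.
  by rewrite -muleA -EFinM mulVf ?gt_eqF // mule1.
by apply: lee_wpmul2r => //; rewrite lee_fin ltW.
Qed.

Lemma rho_ge0 : (0 <= Rn_of P)%E.
Proof.
pose T1 : 'M[R]_(2, n) := const_mx 1.
have hT1 : pos_matrix T1 by move=> i j; rewrite mxE ltr01.
apply: le_trans (_ : _ <= exp_makespan P T1 * ((opt_makespan T1)^-1)%:E)%E _.
  by apply: mule_ge0; [exact: exp_ge0 | rewrite lee_fin invr_ge0 ltW // opt_pos].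
by apply: ereal_sup_ubound; exists T1.
Qed.

Lemma trm_pos b (s : 'S_n) (T : 'M[R]_(2, n)) : pos_matrix T -> pos_matrix (trm b s T).
Proof. by move=> hT i j; rewrite mxE. Qed.

Lemma g_bound_false T (s : 'S_n) : pos_matrix T ->
  (\int[P]_z (makespan (alloc_of (actg ((false, s) : Grp n) z) T) T)%:E
     <= Rn_of P * (opt_makespan T)%:E)%E.
Proof.
move=> hT.
have -> : (fun z => (makespan (alloc_of (actg ((false, s) : Grp n) z) T) T)%:E) =
   (fun z => (makespan (alloc_of z (trm false s T)) (trm false s T))%:E).
  apply/funext => z; congr (_%:E); rewrite -(mk_tr false s); congr makespan.
  apply/ffunP => k; rewrite /alloc_of /xtr /actg /Defs.act !ffunE !mxE /=.
  by rewrite tnth_mktuple permKV addbF.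
rewrite -(opt_tr false s T).
exact: (ratio_le (trm_pos false s hT)).
Qed.

Lemma g_bound_true T (s : 'S_n) : pos_matrix T ->
  (\int[P]_z (makespan (alloc_of (actg ((true, s) : Grp n) z) T) T)%:E
     <= Rn_of P * (opt_makespan T)%:E)%E.
Proof.
move=> hT.
have hc : 0 < opt_makespan T := opt_pos hn hT.
set c := opt_makespan T.
set T2 := trm true s T.
have hT2 : pos_matrix T2 := trm_pos true s hT.
pose Tm (m : nat) := bumpm (m.+1%:R^-1) T2.
have hd : forall m : nat, 0 < (m.+1%:R : R)^-1 by move=> m; rewrite invr_gt0.
have hTm : forall m, pos_matrix (Tm m).
  move=> m i k; rewrite /Tm /bumpm mxE; case: ifP => _; first exact: hT2.
  apply: mulr_gt0; first exact: hT2.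
  by rewrite (lt_le_trans ltr01) // lerDl ltW.
pose h m z := (makespan (alloc_of z (Tm m)) T2)%:E.
pose tg z := (makespan (alloc_of (actg ((true, s) : Grp n) z) T) T)%:E.
have mh : forall m, measurable_fun setT (h m) by move=> m; exact: emeasurable_mk.
have mtg : measurable_fun setT tg.
  exact: (measurableT_comp (emeasurable_mk T T) (measurable_act true s)).
have hbound : forall m, (\int[P]_z h m z <= Rn_of P * ((1 + m.+1%:R^-1) * c)%:E)%E.
  move=> m.
  apply: le_trans (_ : _ <= exp_makespan P (Tm m))%E _.
    apply: ge0_le_integral => //.
    - by move=> z _; rewrite lee_fin; apply: mk_ge0 => i j; exact/ltW/hT2.
    - exact: emeasurable_mk.
    - move=> z _; rewrite lee_fin -[makespan _ (Tm m)]mul1r; apply: mk_scale => // i k.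
      rewrite mul1r /Tm /bumpm mxE; case: ifP => // _.
      by rewrite ler_peMr ?lerDl ?ltW //; exact: hT2.
  apply: le_trans (ratio_le (hTm m)) _.
  apply: lee_wpmul2l; first exact: rho_ge0.
  rewrite lee_fin /c -(opt_tr true s T) -/T2; apply: opt_scale.
    by rewrite ltW // (lt_le_trans ltr01) // lerDl ltW.
  move=> i k; rewrite /Tm /bumpm mxE; case: ifP => _; last by rewrite mulrC.
  by rewrite ler_peMl ?lerDl ?ltW //; exact: hT2.
have f_f : \forall x \ae P, setT x -> h ^~ x @ \oo --> tg x.
  exists (~` @posset R n); split.
  - by apply: measurableC; exact: (@measurable_posset R n).
  - by rewrite probability_setC ?hP ?subee //; exact: (@measurable_posset R n).
  - move=> z /= nQ pz; apply: nQ => _; apply: cvg_near_cst.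
    move: (alloc_lim s hT pz); apply: filterS => m hm.
    by rewrite /h /Tm hm /tg -/T2 mk_tr.
have ig : P.-integrable setT (EFin \o cst (Ksum T2)).
  exact: finite_measure_integrable_cst.
have f_g : \forall x \ae P, forall m, setT x -> (`|h m x| <= (EFin \o cst (Ksum T2)) x)%E.
  apply: aeW => z m _; rewrite gee0_abs; last first.
    by rewrite lee_fin; apply: mk_ge0 => i j; exact/ltW/hT2.
  by rewrite lee_fin; apply: mk_le_K => i j; exact/ltW/hT2.
have [_ _ cvgL] := dominated_convergence measurableT mh mtg f_f ig f_g.
have := rho_ge0; case hr: (Rn_of P) => [r| |] // r0.
- rewrite -EFinM; apply/lee_addgt0Pr => e he.
  rewrite lee_fin in r0.
  have he' : 0 < e / (r * c + 1).
    by apply: divr_gt0 => //; apply: ltr_wpDl => //; apply: mulr_ge0 => //; exact: ltW.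
  rewrite -(cvg_lim _ cvgL) //.
  apply: lime_le; first by apply/cvg_ex; eexists; exact: cvgL.
  near=> m.
  have hdm : (m.+1%:R : R)^-1 < e / (r * c + 1).
    by near: m; exact: (@near_infty_natSinv_lt R (PosNum he')).
  apply: le_trans (hbound m) _; rewrite hr -EFinM lee_fin.
  have ee : e / (r * c + 1) * (r * c + 1) = e.
    by rewrite -mulrA mulVf ?mulr1 // gt_eqF // ltr_wpDl // mulr_ge0 // ltW.
  move: ee hdm (hd m); set d := (m.+1%:R : R)^-1; set e' := e / (r * c + 1) => ee hdm hd0.
  have hp : 0 <= r * c by rewrite mulr_ge0 // ltW.
  move: hp; set p := r * c => hp.
  have -> : r * ((1 + d) * c) = p + p * d by rewrite /p; ring.
  have h1 : p * d <= p * e' by rewrite ler_wpM2l // ltW.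
  have h2 : p * e' <= e by rewrite -ee mulrDr mulr1 mulrC lerDl ltW.
  by rewrite lerD2l (le_trans h1 h2).
- by rewrite gt0_mulye ?lte_fin // leey.
Unshelve. all: by end_near.
Qed.

End Main.


Section Final.
Context (R : realType) (n : nat) (hn : (0 < n)%N) (P : probability (n.-tuple R) R).
Hypothesis hP : supported_pos P.

Lemma g_bound T (g : Grp n) : pos_matrix T ->
  (\int[P]_z (makespan (alloc_of (actg g z) T) T)%:E
     <= Rn_of P * (opt_makespan T)%:E)%E.
Proof.
case: g => [[] s] hT; first exact: g_bound_true.
exact: g_bound_false.
Qed.

Lemma symQ_exp T : pos_matrix T ->
  (exp_makespan (symQ P) T <= Rn_of P * (opt_makespan T)%:E)%E.
Proof.
move=> hT; have hc := opt_pos hn hT.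
rewrite /exp_makespan.
rewrite symQ_integral; last 2 first.
- exact: emeasurable_mk.
- by move=> z; rewrite lee_fin; apply: mk_ge0 => i j; exact/ltW/hT.
have := rho_ge0 hn P; case hr: (Rn_of P) => [r| |] // r0.
- rewrite lee_fin in r0.
  apply: le_trans (_ : _ <= ((NG n)%:R^-1)%:E * \sum_(g : Grp n) (r * opt_makespan T)%:E)%E _.
    apply: lee_wpmul2l; first by rewrite lee_fin invr_ge0.
    apply: lee_sum => g _; rewrite EFinM -hr; exact: g_bound.
  rewrite sumEFin -EFinM lee_fin sumr_const -/(NG n) -(mulr_natr (r * _)) mulrCA mulVf ?mulr1 // pnatr_eq0 -lt0n NG_gt0.
- by [].
- by rewrite gt0_mulye ?lte_fin // leey.
Qed.

Lemma Rn_sym : (Rn_of (symQ P) <= Rn_of P)%E.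
Proof.
apply: ge_ereal_sup => _ [T hT <-].
have hc := opt_pos hn hT.
apply: le_trans (_ : _ <= Rn_of P * (opt_makespan T)%:E * ((opt_makespan T)^-1)%:E)%E _.
  by apply: lee_wpmul2r; [rewrite lee_fin invr_ge0 ltW | exact: symQ_exp].
by rewrite -muleA -EFinM mulfV ?gt_eqF // mule1.
Qed.

End Final.

Local Close Scope ring_scope.

Theorem theorem4 (R : realType) (n : nat) (hn : (0 < n)%N) :
  Rn R n = ereal_inf [set Rn_of P | P in sym_supported R n].
Proof.
apply/eqP; rewrite eq_le; apply/andP; split.
- apply: ereal_inf_le_tmp => _ [P [hs _] <-]; by exists P.
- apply: le_ereal_inf_tmp => _ [P hP <-].
  have hle := Rn_sym hn hP.
  apply: le_trans hle.
  apply: ereal_inf_lbound; exists (symQ P) => //; split.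
  + exact: symQ_supported.
  + exact: symQ_invariant.
Qed.
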